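(* Let $\alpha=(\alpha_1,\dots,\alpha_\ell)\models n$. Then $\mathbb F[\mathcal{OP}_\alpha]$ is a cyclic $H_n(0)$-module generated by the ordered set partition $(12\cdots n,\alpha)$, and the linear map sending $(w,\alpha)\mapsto\overline\pi_w\pi_{w_0(\alpha^c)}$ for all $w\in\mathfrak S_n$ with $\mathrm{Des}(w)\subseteq\mathrm{Des}(\alpha)$ is an isomorphism of $H_n(0)$-modules $\mathbb F[\mathcal{OP}_\alpha]\cong P_{(n),\alpha}=H_n(0)\pi_{w_0(\alpha^c)}$.
   Context: $H_n(0)$ is the 0-Hecke algebra over a field $\mathbb F$ with generators $\pi_1,\dots,\pi_{n-1}$ (relations $\pi_i^2=\pi_i$, far commutation, braid relations); $\overline\pi_i=\pi_i-1$; for a reduced expression $w=s_{i_1}\cdots s_{i_\ell}$, $\pi_w=\pi_{i_1}\cdots\pi_{i_\ell}$, $\overline\pi_w=\overline\pi_{i_1}\cdots\overline\pi_{i_\ell}$. For a composition $\alpha\models n$, $\mathrm{Des}(\alpha)$ is its set of partial sums (excluding $n$), $\alpha^c$ is the composition with $\mathrm{Des}(\alpha^c)=[n-1]\setminus\mathrm{Des}(\alpha)$, and $w_0(\alpha)$ is the minimal-length permutation with descent set $\mathrm{Des}(\alpha)$ (so $w_0(\alpha^c)$ is the minimal-length permutation with descent set $[n-1]\setminus \mathrm{Des}(\alpha)$). For compositions $\gamma\preceq\beta$ (i.e. $\mathrm{Des}(\gamma)\subseteq\mathrm{Des}(\beta)$), $P_{\gamma,\beta}=H_n(0)\overline\pi_{w_0(\gamma)}\pi_{w_0(\beta^c)}$;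 $(n)$ is the one-part composition. An ordered set partition $\sigma=(B_1\mid\cdots\mid B_k)$ of $[n]$ is identified with $(w,\alpha)$, $\alpha=(|B_1|,\dots,|B_k|)$ its shape and $w$ the permutation listing $B_1,\dots,B_k$ each increasingly; $\mathcal{OP}_\alpha$ is the set of ordered set partitions of shape $\alpha$ (equivalently $w$ with $\mathrm{Des}(w)\subseteq\mathrm{Des}(\alpha)$). $H_n(0)$ acts on $\mathbb F[\mathcal{OP}_\alpha]$ by: $\pi_i.\sigma=0$ if $i+1$ lies in a block to the left of $i$; $\pi_i.\sigma=\sigma+s_i(\sigma)$ if $i+1$ lies in a block to the right of $i$; $\pi_i.\sigma=\sigma$ if $i,i+1$ are in the same block; here $s_i(\sigma)$ swaps the letters $i$ and $i+1$. *)

(* Defs.v *)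
From HB Require Import structures.
From mathcomp Require Import all_boot all_order fingroup perm all_algebra.
Set Implicit Arguments. Unset Strict Implicit. Unset Printing Implicit Defensive.
Import GRing.Theory.

(* Conventions: letters and positions are 0-indexed elements of 'I_n.
   A permutation w : 'S_n is read as the word w(0) w(1) ... w(n-1).
   The paper's generator pi_i (i in [n-1]) is indexed here by i-1 : 'I_n,
   i.e. generator index i : 'I_n with i.+1 < n, swapping letters i and i+1. *)

Section Defs.
Variable n : nat.

Definition nxt (i : 'I_n) : 'I_n := odflt i (insub i.+1 : option 'I_n).

Definition sgen (i : 'I_n) : 'S_n := tperm i (nxt i).

Definition validgen (i : 'I_n) : bool := i.+1 < n.
Definition validword (ws : seq 'I_n) : bool := all validgen ws.

(* s_i w : swap the letters i, i+1 in the word w (apply w, then s_i) *)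
Definition lmul (i : 'I_n) (w : 'S_n) : 'S_n := (w * sgen i)%g.

(* the permutation s_{i1} s_{i2} ... s_{ik} (composition of functions) *)
Definition wordperm (ws : seq 'I_n) : 'S_n := foldr lmul 1%g ws.

(* Coxeter length = number of inversions *)
Definition len (w : 'S_n) : nat :=
  #|[set pq : 'I_n * 'I_n | (pq.1 < pq.2)%N && (w pq.2 < w pq.1)%N]|.

Definition reduced_word (ws : seq 'I_n) (w : 'S_n) : bool :=
  [&& validword ws, wordperm ws == w & size ws == len w].

(* descent set of w, as a set of (1-indexed) descents d in [n-1]:
   d is a descent iff w(d-1) > w(d) in 0-indexed positions *)
Definition wDes (w : 'S_n) : pred nat :=
  fun d => [exists p : 'I_n, [exists q : 'I_n,
              [&& val q == (val p).+1, (w q < w p)%N & d == val q]]].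

Definition is_composition (al : seq nat) : bool :=
  all (fun a => 0 < a)%N al && (sumn al == n).

Definition Des (al : seq nat) : seq nat :=
  [seq sumn (take k al) | k <- iota 1 (size al).-1].

Definition DesC (al : seq nat) : pred nat :=
  fun d => [&& (0 < d)%N, (d < n)%N & d \notin Des al].

Definition is_w0c (al : seq nat) (v : 'S_n) : Prop :=
  wDes v =1 DesC al /\
  forall u : 'S_n, wDes u =1 DesC al -> (len v <= len u)%N.

(* ordered set partitions of shape alpha, as permutations w with
   Des(w) subset Des(alpha) *)
Definition isOP (al : seq nat) (w : 'S_n) : bool :=
  [forall d : 'I_n, wDes w d ==> (val d \in Des al)].

Definition OP (al : seq nat) := {w : 'S_n | isOP al w}.

Definition blk (al : seq nat) (p : 'I_n) : nat := count (fun d => d <= p)%N (Des al).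

Local Open Scope ring_scope.
Variable F : fieldType.

(* ----- H_n(0) realised in its regular representation: an element is
   its coefficient vector on the basis {pi_w : w in S_n}. *)
Definition Hn := {ffun 'S_n -> F}.

Definition eH (w : 'S_n) : Hn := [ffun u => (u == w)%:R].

(* pi_i pi_w = pi_{s_i w} if len(s_i w) > len w, and pi_w otherwise *)
Definition tgt (i : 'I_n) (w : 'S_n) : 'S_n :=
  if (len w < len (lmul i w))%N then lmul i w else w.

(* left multiplication by the generator pi_i *)
Definition hpi (i : 'I_n) (h : Hn) : Hn :=
  [ffun u => \sum_(w : 'S_n | tgt i w == u) h w].

Definition hpibar (i : 'I_n) (h : Hn) : Hn := hpi i h - h.

Definition hpi_word (ws : seq 'I_n) (h : Hn) : Hn := foldr hpi h ws.
Definition hpibar_word (ws : seq 'I_n) (h : Hn) : Hn := foldr hpibar h ws.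

(* h lies in the left ideal H_n(0) h0 (spanned by pi_u h0, u in S_n,
   i.e. by all generator words applied to h0) *)
Definition in_left_ideal (h0 h : Hn) : Prop :=
  exists (m : nat) (c : 'I_m -> F) (ws : 'I_m -> seq 'I_n),
    (forall k, validword (ws k)) /\
    h = [ffun u => \sum_(k < m) c k * hpi_word (ws k) h0 u].

Variable al : seq nat.

Definition Mod := {ffun OP al -> F}.

Definition eM (s : OP al) : Mod := [ffun t => (t == s)%:R].

(* coefficient of tau in pi_i . sigma *)
Definition opcoef (i : 'I_n) (s t : OP al) : F :=
  let w := val s in
  let bi := blk al ((w^-1)%g i) in
  let bj := blk al ((w^-1)%g (nxt i)) in
  if (bj < bi)%N then 0                       (* i+1 left of i *)
  else if (bi < bj)%N then                    (* i+1 right of i *)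
    (val t == w)%:R + (val t == lmul i w)%:R
  else (t == s)%:R.

Definition opi (i : 'I_n) (x : Mod) : Mod :=
  [ffun t => \sum_(s : OP al) x s * opcoef i s t].

Definition opi_word (ws : seq 'I_n) (x : Mod) : Mod := foldr opi x ws.

End Defs.

(* Main.v *)
Require Import Defs.
From HB Require Import structures.
From mathcomp Require Import all_boot all_order fingroup perm all_algebra.
From mathcomp Require Import zify ring.
Import GRing.Theory.
Set Implicit Arguments. Unset Strict Implicit. Unset Printing Implicit Defensive.

Section Perm.
Variable n : nat.
Implicit Types (i j : 'I_n) (w u : 'S_n) (ws a : seq 'I_n).

Definition pos (w : 'S_n) (x : 'I_n) : 'I_n := (w^-1)%g x.

Lemma nxtE i : validgen i -> val (nxt i) = i.+1.
Proof. by rewrite /validgen /nxt => h; rewrite insubT. Qed.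

Lemma posM w k x : pos (lmul k w) x = pos w (sgen k x).
Proof. by rewrite /pos /lmul invMg permM /sgen tpermV. Qed.

Lemma lmulE w k x : lmul k w x = sgen k (w x).
Proof. by rewrite /lmul permM. Qed.

Lemma lmulK (k : 'I_n) : involutive (lmul k).
Proof. by move=> w; rewrite /lmul /sgen -mulgA tperm2 mulg1. Qed.

Lemma posK w x : w (pos w x) = x.
Proof. by rewrite /pos permKV. Qed.

Lemma Kpos w x : pos w (w x) = x.
Proof. by rewrite /pos permK. Qed.

Lemma foldr_lmul ws x : foldr (@lmul n) x ws = (x * wordperm ws)%g.
Proof.
elim: ws => [|i ws IH] /=; first by rewrite /wordperm /= mulg1.
by rewrite IH /wordperm /= /lmul mulgA.
Qed.

Lemma sgenD i x : validgen i -> val x != val i -> val x != i.+1 -> sgen i x = x.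
Proof.
move=> v h1 h2; rewrite /sgen tpermD //; apply/eqP => /(congr1 val) /eqP.
  by rewrite eq_sym (negbTE h1).
by rewrite nxtE // eq_sym (negbTE h2).
Qed.

Lemma sgenL i : sgen i i = nxt i.
Proof. by rewrite /sgen tpermL. Qed.
Lemma sgenR i : sgen i (nxt i) = i.
Proof. by rewrite /sgen tpermR. Qed.

Definition Inv w := [set pq : 'I_n * 'I_n | (pq.1 < pq.2)%N && (w pq.2 < w pq.1)%N].
Lemma lenE w : len w = #|Inv w|. Proof. by []. Qed.

Lemma sgen_lt i x y : validgen i -> ~~ ((x == i) && (y == nxt i)) ->
  ~~ ((x == nxt i) && (y == i)) -> (sgen i x < sgen i y)%N = (x < y)%N.
Proof.
move=> v; have hn := nxtE v.
have vx z : z != i -> z != nxt i -> sgen i z = z.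
  by move=> h1 h2; rewrite /sgen tpermD // eq_sym.
case: (eqVneq x i) => [->|xi]; [|case: (eqVneq x (nxt i)) => [->|xn]];
  (case: (eqVneq y i) => [->|yi]; [|case: (eqVneq y (nxt i)) => [->|yn]]);
  rewrite ?sgenL ?sgenR ?vx ?eqxx //=;
  repeat match goal with H : is_true (_ != _) |- _ => move: H end;
  rewrite -?(inj_eq val_inj) /= ?hn => *; apply/idP/idP => *; lia.
Qed.


Lemma nxt_neq i : validgen i -> nxt i != i.
Proof. move=> v; apply/eqP => /(congr1 val); rewrite nxtE //= => h; lia. Qed.

Lemma pos_neq w i : validgen i -> pos w i != pos w (nxt i).
Proof. by move=> v; rewrite (inj_eq (@perm_inj _ _)) eq_sym nxt_neq. Qed.

Lemma len_lmul_up w i : validgen i -> (pos w i < pos w (nxt i))%N ->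
  len (lmul i w) = (len w).+1.
Proof.
move=> v hab; rewrite !lenE; set a := pos w i; set b := pos w (nxt i).
have -> : Inv (lmul i w) = (a, b) |: Inv w.
  apply/setP => -[p q]; rewrite !inE /= !lmulE.
  case: (eqVneq (p, q) (a, b)) => [[-> ->]|neq] /=.
    by rewrite !posK sgenL sgenR hab nxtE //= ltnSn.
  case pq: (p < q) => //=; apply: sgen_lt => //.
    apply/negP => /andP[/eqP h1 /eqP h2].
    have hq : q = a by rewrite /a -h1 Kpos.
    have hp : p = b by rewrite /b -h2 Kpos.
    by move: pq; rewrite hq hp ltnNge ltnW.
  apply/negP => /andP[/eqP h1 /eqP h2].
  have hq : q = b by rewrite /b -h1 Kpos.
  have hp : p = a by rewrite /a -h2 Kpos.
  by move: neq; rewrite hq hp eqxx.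
rewrite cardsU1 inE /= !posK hab /= nxtE //.
by rewrite ltnNge leqnSn.
Qed.

Lemma len_lmul_down w i : validgen i -> (pos w (nxt i) < pos w i)%N ->
  len w = (len (lmul i w)).+1.
Proof.
move=> v h; rewrite -{1}(lmulK i w) len_lmul_up //.
by rewrite !posM sgenL sgenR.
Qed.

Lemma len_lmul_le w i : validgen i -> (len (lmul i w) <= (len w).+1)%N.
Proof.
move=> v; case: (ltngtP (pos w i) (pos w (nxt i))) => h.
- by rewrite len_lmul_up.
- by rewrite (len_lmul_down v h) ltnW.
- by move: (pos_neq w v); rewrite -(inj_eq val_inj) /= h eqxx.
Qed.

Lemma tgtE w i : validgen i ->
  tgt i w = if (pos w i < pos w (nxt i))%N then lmul i w else w.
Proof.
move=> v; rewrite /tgt; case: (ltngtP (pos w i) (pos w (nxt i))) => h.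
- by rewrite len_lmul_up // ltnSn.
- by rewrite (len_lmul_down v h) ltnNge leqnSn.
- by move: (pos_neq w v); rewrite -(inj_eq val_inj) /= h eqxx.
Qed.

Lemma len_tgt w i : validgen i -> (len (tgt i w) <= (len w).+1)%N.
Proof. by move=> v; rewrite tgtE //; case: ifP => // _; apply: len_lmul_le. Qed.

Lemma len_wordperm ws : validword ws -> (len (wordperm ws) <= size ws)%N.
Proof.
elim: ws => [|i ws IH] /=.
  move=> _; rewrite /wordperm /= lenE leqn0 cards_eq0; apply/eqP/setP => -[p q].
  by rewrite !inE /= !perm1; case: ltngtP.
case/andP => v vs; apply: leq_trans (len_lmul_le _ v) _; by rewrite ltnS IH.
Qed.

Lemma red_cons i a w : reduced_word (i :: a) w ->
  [/\ validgen i, reduced_word a (lmul i w) & (pos w (nxt i) < pos w i)%N].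
Proof.
case/and3P => /= /andP[v va] /eqP hw /eqP hs.
have wa : wordperm a = lmul i w by rewrite -hw /wordperm /= lmulK.
have hl := len_wordperm va; rewrite wa in hl.
case: (ltngtP (pos w i) (pos w (nxt i))) => h.
- by move: hl; rewrite len_lmul_up // -hs ltnNge leqW.
- split => //; apply/and3P; split => //; first by rewrite wa.
  by move: hs; rewrite (len_lmul_down v h) => -[->].
- by move: (pos_neq w v); rewrite -(inj_eq val_inj) /= h eqxx.
Qed.

Lemma red_consI i a w : validgen i -> (pos w (nxt i) < pos w i)%N ->
  reduced_word a (lmul i w) -> reduced_word (i :: a) w.
Proof.
move=> v h /and3P[va /eqP wa /eqP sa]; apply/and3P; split => /=.
- by rewrite v.
- by rewrite /wordperm /= -/(wordperm a) wa lmulK.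
- by rewrite (len_lmul_down v h) sa.
Qed.

End Perm.

Definition fsw (i y : nat) : nat := if y == i then i.+1 else if y == i.+1 then i else y.

Lemma fsw_spec i y : (y = i /\ fsw i y = i.+1) \/ (y = i.+1 /\ fsw i y = i) \/
  (y <> i /\ y <> i.+1 /\ fsw i y = y).
Proof. rewrite /fsw; case: eqP => h; first by left. case: eqP => h'; [right; left|right; right] => //. Qed.

Section PermB.
Variable n : nat.
Implicit Types (i j : 'I_n) (w u : 'S_n) (ws a : seq 'I_n).

Lemma sgen_val i x : validgen i -> val (sgen i x) = fsw i x.
Proof.
move=> v; rewrite /fsw; case: (eqVneq x i) => [->|xi]; first by rewrite sgenL nxtE // eqxx.
have -> : (val x == val i) = false by apply/negbTE; rewrite (inj_eq val_inj).
case: (eqVneq (val x) i.+1) => h.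
  have -> : x = nxt i by apply: val_inj; rewrite nxtE.
  by rewrite sgenR.
by rewrite sgenD // (inj_eq val_inj).
Qed.

Lemma lmul_comm w i j : validgen i -> validgen j -> (i.+1 < j)%N ->
  lmul i (lmul j w) = lmul j (lmul i w).
Proof.
move=> vi vj ij; apply/permP => x; apply: val_inj.
rewrite !lmulE !sgen_val //; move: (val (w x)) => y.
move: (fsw_spec j y) (fsw_spec i (fsw j y)) (fsw_spec i y) (fsw_spec j (fsw i y)).
lia.
Qed.

Lemma lmul_braid w i j : validgen i -> validgen j -> val j = i.+1 ->
  lmul i (lmul j (lmul i w)) = lmul j (lmul i (lmul j w)).
Proof.
move=> vi vj ij; apply/permP => x; apply: val_inj.
rewrite !lmulE !sgen_val //; move: (val (w x)) => y.
rewrite ij.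
move: (fsw_spec i y) (fsw_spec i.+1 (fsw i y)) (fsw_spec i (fsw i.+1 (fsw i y))).
move: (fsw_spec i.+1 y) (fsw_spec i (fsw i.+1 y)) (fsw_spec i.+1 (fsw i (fsw i.+1 y))).
lia.
Qed.

Lemma posM_val w k x : validgen k -> val (pos (lmul k w) x) = val (pos w (sgen k x)).
Proof. by move=> v; rewrite posM. Qed.

Section Mats.
Variable X : Type.
Variable T : 'I_n -> X -> X.
Hypothesis Tc : forall i j x, validgen i -> validgen j -> (i.+1 < j)%N ->
  T i (T j x) = T j (T i x).
Hypothesis Tb : forall i j x, validgen i -> validgen j -> val j = i.+1 ->
  T i (T j (T i x)) = T j (T i (T j x)).
Variable rw : 'S_n -> seq 'I_n.
Hypothesis Hrw : forall w, reduced_word (rw w) w.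

Lemma sgen_other i y : validgen i -> val y != val i -> val y != i.+1 -> sgen i y = y.
Proof. by move=> v h1 h2; rewrite sgenD. Qed.

Lemma matsumoto_far w i j a b x : validgen i -> validgen j -> (i.+1 < j)%N ->
  (forall w' a b, (len w' < len w)%N -> reduced_word a w' -> reduced_word b w' ->
     foldr T x a = foldr T x b) ->
  reduced_word (i :: a) w -> reduced_word (j :: b) w ->
  foldr T x (i :: a) = foldr T x (j :: b).
Proof.
move=> vi vj ij IH ra rb.
case: (red_cons ra) => _ ra' di; case: (red_cons rb) => _ rb' dj.
have hi : (len (lmul i w) < len w)%N by rewrite (len_lmul_down vi di).
have hj : (len (lmul j w) < len w)%N by rewrite (len_lmul_down vj dj).
set u := lmul j (lmul i w).
have hn := nxtE vi; have hm := nxtE vj.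
have e1 : reduced_word (j :: rw u) (lmul i w).
  apply: red_consI => //.
  rewrite !posM (@sgenD _ i j) ?(@sgenD _ i (nxt j)) //= ?hm; lia.
have e2 : reduced_word (i :: rw u) (lmul j w).
  apply: red_consI => //; last by rewrite lmul_comm.
  rewrite !posM (@sgenD _ j i) ?(@sgenD _ j (nxt i)) //= ?hn; lia.
rewrite /= (IH _ _ _ hi ra' e1) (IH _ _ _ hj rb' e2) /=.
by rewrite Tc.
Qed.

Lemma matsumoto_braid w i j a b x : validgen i -> validgen j -> val j = i.+1 ->
  (forall w' a b, (len w' < len w)%N -> reduced_word a w' -> reduced_word b w' ->
     foldr T x a = foldr T x b) ->
  reduced_word (i :: a) w -> reduced_word (j :: b) w ->
  foldr T x (i :: a) = foldr T x (j :: b).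
Proof.
move=> vi vj ij IH ra rb.
case: (red_cons ra) => _ ra' di; case: (red_cons rb) => _ rb' dj.
have hi : (len (lmul i w) < len w)%N by rewrite (len_lmul_down vi di).
have hj : (len (lmul j w) < len w)%N by rewrite (len_lmul_down vj dj).
have hn := nxtE vi; have hm := nxtE vj.
have nij : nxt i = j by apply: val_inj; rewrite hn ij.
have s1 : sgen i j = i by rewrite -nij sgenR.
have s2 : sgen i i = j by rewrite sgenL.
have s3 : sgen i (nxt j) = nxt j by rewrite sgenD //= ?hm ?ij; lia.
have s4 : sgen j i = i by rewrite sgenD //= ?ij; lia.
have s5 : sgen j j = nxt j by rewrite sgenL.
have s6 : sgen j (nxt j) = j by rewrite sgenR.
rewrite nij in di.
set u := lmul i (lmul j (lmul i w)).
have e1 : reduced_word (i :: rw u) (lmul j (lmul i w)).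
  by apply: red_consI => //; rewrite !posM nij s5 s3 s4 s2.
have e2 : reduced_word (j :: i :: rw u) (lmul i w).
  apply: red_consI => //; rewrite !posM s3 s1; exact: ltn_trans dj di.
have f1 : reduced_word (j :: rw u) (lmul i (lmul j w)).
  apply: red_consI => //; last by rewrite /u lmul_braid.
  by rewrite !posM s3 s6 s1 s4.
have f2 : reduced_word (i :: j :: rw u) (lmul j w).
  apply: red_consI => //; rewrite !posM nij s5 s4; exact: ltn_trans dj di.
rewrite /= (IH _ _ _ hi ra' e2) (IH _ _ _ hj rb' f2) /=.
by rewrite Tb.
Qed.

Lemma matsumoto x w a b : reduced_word a w -> reduced_word b w ->
  foldr T x a = foldr T x b.
Proof.
have [k] := ubnP (len w); elim: k w a b => // k IHk w a b hk.
have IH : forall w' a b, (len w' < len w)%N -> reduced_word a w' ->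
    reduced_word b w' -> foldr T x a = foldr T x b.
  by move=> w' a' b' h; apply: IHk; apply: leq_trans h _.
case: a => [|i a]; case: b => [|j b] //.
- by case/and3P => _ _ /eqP h1 /and3P[_ _ /eqP]; rewrite -h1.
- by case/and3P => _ _ /eqP h1 /and3P[_ _ /eqP]; rewrite -h1.
move=> ra rb.
case: (red_cons ra) => vi ra' di; case: (red_cons rb) => vj rb' dj.
case: (eqVneq i j) => [eij|nij].
  subst j; rewrite /= (IH _ _ _ _ ra' rb') //.
  by rewrite (len_lmul_down vi di).
case: (ltngtP i j) => h.
- case: (ltngtP i.+1 j) => h2.
  + exact: (matsumoto_far vi vj h2 IH ra rb).
  + lia.
  + exact: (matsumoto_braid vi vj (esym h2) IH ra rb).
- case: (ltngtP j.+1 i) => h2.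
  + by symmetry; exact: (matsumoto_far vj vi h2 IH rb ra).
  + lia.
  + by symmetry; exact: (matsumoto_braid vj vi (esym h2) IH rb ra).
- by move: nij; rewrite -(inj_eq val_inj) /= h eqxx.
Qed.
End Mats.
End PermB.

Section Tgt.
Variable n : nat.
Implicit Types (i j : 'I_n) (w u : 'S_n) (ws a : seq 'I_n).

Lemma tgt_idem w i : validgen i -> tgt i (tgt i w) = tgt i w.
Proof.
move=> v; rewrite (tgtE w v); case: ifP => h; rewrite tgtE // ?h //.
by rewrite !posM sgenL sgenR ltnNge ltnW.
Qed.

Ltac inner_tgt sf :=
  match goal with
  | |- context [tgt ?k ?u] =>
    lazymatch u with
    | context [tgt _ _] => fail
    | _ => let V := fresh "V" in let H := fresh "H" in
           (have V : validgen k by assumption);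
           rewrite (tgtE u V); clear V; case: ifP => H; [|move/negbT in H];
           rewrite ?posM ?sf in H
    end
  end.

Lemma tgt_far w i j : validgen i -> validgen j -> (i.+1 < j)%N ->
  tgt i (tgt j w) = tgt j (tgt i w).
Proof.
move=> vi vj ij.
have hn := nxtE vi; have hm := nxtE vj.
have s1 : sgen i j = j by rewrite sgenD //=; lia.
have s2 : sgen i (nxt j) = nxt j by rewrite sgenD //= hm; lia.
have s3 : sgen j i = i by rewrite sgenD //=; lia.
have s4 : sgen j (nxt i) = nxt i by rewrite sgenD //= hn; lia.
have d1 := pos_neq w vi; have d2 := pos_neq w vj.
have sf := (s1, s2, s3, s4, sgenL, sgenR).
do 4 (try inner_tgt sf; try lia); try reflexivity; by rewrite lmul_comm.
Qed.


Lemma tgt_braid w i j : validgen i -> validgen j -> val j = i.+1 ->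
  tgt i (tgt j (tgt i w)) = tgt j (tgt i (tgt j w)).
Proof.
move=> vi vj ij.
have hn := nxtE vi; have hm := nxtE vj.
have nij : nxt i = j by apply: val_inj; rewrite hn ij.
have s1 : sgen i j = i by rewrite -nij sgenR.
have s2 : sgen i i = j by rewrite sgenL.
have s3 : sgen i (nxt j) = nxt j by rewrite sgenD //= ?hm ?ij; lia.
have s4 : sgen j i = i by rewrite sgenD //= ?ij; lia.
have s5 : sgen j j = nxt j by rewrite sgenL.
have s6 : sgen j (nxt j) = j by rewrite sgenR.
have d1 := pos_neq w vi; have d2 := pos_neq w vj.
have d3 : pos w i != pos w (nxt j).
  by rewrite (inj_eq (@perm_inj _ _)) -(inj_eq val_inj) /= hm ij; lia.
rewrite nij in d1.
have sf := (nij, s1, s2, s3, s4, s5, s6).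
do 6 (try inner_tgt sf; try lia); try reflexivity; by rewrite lmul_braid.
Qed.

End Tgt.

Section Blocks.
Variable n : nat.
Variable al : seq nat.
Hypothesis Hal : is_composition n al.

Definition Sp j := sumn (take j al).
Definition bk (y : nat) := count (fun d => d <= y) (Des al).

Lemma blkE (p : 'I_n) : blk al p = bk p.
Proof. by []. Qed.

Lemma al_pos : all (fun a => 0 < a) al.
Proof. by case/andP: Hal. Qed.
Lemma sum_al : sumn al = n.
Proof. by case/andP: Hal => _ /eqP. Qed.

Lemma Sp0 : Sp 0 = 0. Proof. by rewrite /Sp take0. Qed.
Lemma Sp_ge j : (size al <= j)%N -> Sp j = n.
Proof. by move=> h; rewrite /Sp take_oversize // sum_al. Qed.
Lemma SpS j : (j < size al)%N -> Sp j.+1 = Sp j + nth 0 al j.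
Proof. by move=> h; rewrite /Sp (take_nth 0 h) sumn_rcons. Qed.
Lemma SpS_lt j : (j < size al)%N -> (Sp j < Sp j.+1)%N.
Proof.
move=> h; rewrite SpS // -{1}(addn0 (Sp j)) ltn_add2l.
by have := all_nthP 0 al_pos; move/(_ j h).
Qed.
Lemma Sp_mono j k : (j <= k)%N -> (Sp j <= Sp k)%N.
Proof.
elim: k => [|k IH]; first by rewrite leqn0 => /eqP ->.
rewrite leq_eqVlt => /orP[/eqP -> //|/IH h]; apply: leq_trans h _.
case: (ltnP k (size al)) => hk; first exact: ltnW (SpS_lt hk).
by rewrite !Sp_ge // ltnW.
Qed.
Lemma Sp_strict j k : (j < k)%N -> (k <= size al)%N -> (Sp j < Sp k)%N.
Proof.
move=> jk kl; apply: leq_trans (Sp_mono (_ : j.+1 <= k)%N) => //.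
apply: SpS_lt; exact: leq_trans jk kl.
Qed.
Lemma Sp_lt_inv j k : (k <= size al)%N -> (Sp j < Sp k)%N -> (j < k)%N.
Proof.
move=> kl h; rewrite ltnNge; apply/negP => kj.
by move: (Sp_mono kj); rewrite leqNgt h.
Qed.
Lemma Sp_size : Sp (size al) = n.
Proof. by rewrite Sp_ge. Qed.

Lemma DesE : Des al = [seq Sp k | k <- iota 1 (size al).-1].
Proof. by []. Qed.

Lemma memDes d : (d \in Des al) = [exists k : 'I_(size al), (0 < k)%N && (d == Sp k)].
Proof.
rewrite DesE; apply/mapP/existsP => [[k]|[k /andP[k0 /eqP ->]]].
  rewrite mem_iota => /andP[k1 k2] ->.
  have kl : (k < size al)%N by lia.
  by exists (Ordinal kl); rewrite /= k1 eqxx.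
exists (val k) => //; rewrite mem_iota k0 /=.
by case: k k0 => k /= kl _; lia.
Qed.

Lemma uniqDes : uniq (Des al).
Proof.
rewrite DesE map_inj_in_uniq ?iota_uniq // => j k.
rewrite !mem_iota => /andP[_ hj] /andP[_ hk] e.
have jl : (j <= size al)%N by lia.
have kl : (k <= size al)%N by lia.
case: (ltngtP j k) => // h.
  by move: (Sp_strict h kl); rewrite e ltnn.
by move: (Sp_strict h jl); rewrite e ltnn.
Qed.

Lemma bk_mono y z : (y <= z)%N -> (bk y <= bk z)%N.
Proof. move=> h; apply: sub_count => d /= dy; exact: leq_trans dy h. Qed.

Lemma bkS y : bk y.+1 = bk y + (y.+1 \in Des al).
Proof.
rewrite /bk -count_uniq_mem ?uniqDes // -count_predUI.
rewrite (@eq_count _ (predI _ _) pred0) ?count_pred0 ?addn0; last first.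
  move=> d /=; apply/negbTE; rewrite negb_and -ltnNge.
  by case: eqP => [->|]; rewrite ?ltnSn ?orbT.
by apply: eq_count => d /=; rewrite leq_eqVlt ltnS orbC.
Qed.

Lemma bk0 : (0 < n)%N -> bk 0 = 0.
Proof.
move=> n0; apply/eqP; rewrite -leqn0 leqNgt -has_count; apply/hasP => -[d].
rewrite memDes => /existsP[k /andP[k0 /eqP ->]].
by rewrite leqn0 => /eqP e; move: (Sp_strict k0 (ltnW (ltn_ord k))); rewrite Sp0 e ltnn.
Qed.

Lemma galois y : (y < n)%N ->
  [/\ (Sp (bk y) <= y)%N, (y < Sp (bk y).+1)%N & (bk y < size al)%N].
Proof.
elim: y => [|y IH] yn.
  have l0 : (0 < size al)%N.
    rewrite lt0n; apply/negP => /eqP e; move: Sp_size; rewrite e Sp0 => e'; lia.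
  rewrite bk0 //; split => //; first by rewrite Sp0.
  by move: (Sp_strict (ltn0Sn 0) l0); rewrite Sp0.
have [h1 h2 h3] := IH (ltnW yn); rewrite bkS.
case hD: (y.+1 \in Des al) => /=.
  move: hD; rewrite memDes => /existsP[k /andP[k0 /eqP ek]].
  have kl := ltn_ord k.
  have mk : (bk y < k)%N.
    apply: Sp_lt_inv; first exact: ltnW. by rewrite -ek; lia.
  have km : (k <= (bk y).+1)%N.
    rewrite leqNgt; apply/negP => h; move: (Sp_strict h (ltnW kl)); lia.
  have ekm : (k : nat) = (bk y).+1 by lia.
  rewrite addn1 -ekm -ek; split => //.
  by rewrite ek Sp_strict.
rewrite addn0; split => //; first exact: ltnW.
rewrite ltn_neqAle h2 andbT; apply/eqP => e.
case: (ltnP (bk y).+1 (size al)) => hl.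
  move/negbT: hD; rewrite memDes => /existsPn /(_ (Ordinal hl)).
  by rewrite /= e eqxx.
by move: e yn; rewrite Sp_ge // => ->; rewrite ltnn.
Qed.

Lemma bk_char y j : (y < n)%N -> (j < size al)%N -> (Sp j <= y)%N -> (y < Sp j.+1)%N ->
  bk y = j.
Proof.
move=> yn jl h1 h2; have [g1 g2 g3] := galois yn.
case: (ltngtP (bk y) j) => // h.
  by move: (Sp_mono h) => h'; lia.
by move: (Sp_mono h) => h'; lia.
Qed.

End Blocks.

Section InvDet.
Variable n : nat.

Lemma card_lt_ord m : (m <= n)%N -> #|[set k : 'I_n | (k < m)%N]| = m.
Proof.
elim: m => [|m IH] h.
  by apply/eqP; rewrite cards_eq0; apply/eqP/setP => k; rewrite !inE.
have mn : (m < n)%N by [].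
have -> : [set k : 'I_n | (k < m.+1)%N] = Ordinal mn |: [set k : 'I_n | (k < m)%N].
  by apply/setP => k; rewrite !inE ltnS leq_eqVlt -(inj_eq val_inj).
by rewrite cardsU1 inE /= ltnn IH // ltnW.
Qed.

Lemma card_below (v : 'S_n) x : #|[set y | (v y < v x)%N]| = v x.
Proof.
have -> : [set y | (v y < v x)%N] = v @^-1: [set k : 'I_n | (k < v x)%N].
  by apply/setP => y; rewrite !inE.
by rewrite card_preimset ?card_lt_ord //; [apply: ltnW | apply: perm_inj].
Qed.

Lemma inv_det (v r : 'S_n) : Inv v = Inv r -> v = r.
Proof.
move=> e; have key (u : 'S_n) x : [set y | (u y < u x)%N] =
   [set y : 'I_n | ((x < y)%N && ((x, y) \in Inv u)) || ((y < x)%N && ((y, x) \notin Inv u))].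
  apply/setP => y; rewrite !inE /=.
  case: (ltngtP x y) => h /=.
  - by rewrite orbF.
  - rewrite -leqNgt [RHS]leq_eqVlt.
    have -> : (nat_of_ord (u y) == u x) = false.
      apply/negbTE; rewrite (inj_eq val_inj) (inj_eq perm_inj).
      by apply/eqP => ey; move: h; rewrite ey ltnn.
    by [].
  - have -> : y = x by apply: val_inj => /=; rewrite h.
    by rewrite ltnn.
apply/permP => x; apply: val_inj.
by rewrite /= -card_below -(card_below r) !key e.
Qed.
End InvDet.

Section RBlocks.
Variable n : nat.
Variable al : seq nat.
Hypothesis Hal : is_composition n al.

Local Notation bk := (@bk al).
Local Notation Sp := (Sp al).

Definition rn (y : nat) := Sp (bk y) + Sp (bk y).+1 - 1 - y.

Lemma rn_props y : (y < n)%N ->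
  [/\ (rn y < n)%N, bk (rn y) = bk y & rn (rn y) = y].
Proof.
move=> yn; have [g1 g2 g3] := galois Hal yn.
have hS : (Sp (bk y).+1 <= n)%N.
  rewrite -(Sp_size Hal); exact: (Sp_mono Hal g3).
have r1 : (Sp (bk y) <= rn y)%N by rewrite /rn; lia.
have r2 : (rn y < Sp (bk y).+1)%N by rewrite /rn; lia.
have rl : (rn y < n)%N by lia.
have hb : bk (rn y) = bk y by apply: (bk_char Hal).
split => //; rewrite {1}/rn hb /rn; lia.
Qed.

Lemma rn_lt (x : 'I_n) : (rn x < n)%N.
Proof. by case: (rn_props (ltn_ord x)). Qed.

Definition rf (x : 'I_n) : 'I_n := Ordinal (rn_lt x).

Lemma rfK : involutive rf.
Proof. by move=> x; apply: val_inj => /=; case: (rn_props (ltn_ord x)). Qed.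

Definition rp : 'S_n := perm (can_inj rfK).

Lemma rpE x : val (rp x) = rn x.
Proof. by rewrite permE. Qed.

Lemma rpK x : rp (rp x) = x.
Proof. by rewrite !permE rfK. Qed.

Lemma rp_bk x : bk (rp x) = bk x.
Proof. by rewrite rpE; case: (rn_props (ltn_ord x)). Qed.

Lemma rp_same (x y : 'I_n) : bk x = bk y -> (x < y)%N -> (rp y < rp x)%N.
Proof.
move=> e xy; rewrite !rpE /rn e.
have [g1 g2 g3] := galois Hal (ltn_ord x).
have [h1 h2 h3] := galois Hal (ltn_ord y).
rewrite e in g1 g2; lia.
Qed.

Lemma rp_diff (x y : 'I_n) : (bk x < bk y)%N -> (rp x < rp y)%N.
Proof.
move=> e; rewrite !rpE /rn.
have [g1 g2 g3] := galois Hal (ltn_ord x).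
have [h1 h2 h3] := galois Hal (ltn_ord y).
have := Sp_mono Hal e; lia.
Qed.

Lemma bk_lt (x y : 'I_n) : (x < y)%N -> bk x != bk y -> (bk x < bk y)%N.
Proof. by move=> xy ne; rewrite ltn_neqAle ne bk_mono // ltnW. Qed.

Lemma wDesP (w : 'S_n) (d : nat) :
  reflect (exists p q : 'I_n, [/\ (q : nat) = p.+1, (w q < w p)%N & d = q]) (wDes w d).
Proof.
apply: (iffP existsP) => [[p /existsP[q /and3P[/eqP e1 e2 /eqP e3]]]|[p [q [e1 e2 e3]]]].
  by exists p, q.
by exists p; apply/existsP; exists q; rewrite e3 e2 /=; apply/andP; split; apply/eqP.
Qed.

Lemma bk_consec (p q : 'I_n) : (q : nat) = p.+1 -> bk q = bk p + ((q : nat) \in Des al).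
Proof. by move=> e; have e' : nat_of_ord q = p.+1 := e; rewrite e' (bkS Hal) -e'. Qed.

Lemma wDes_rp : wDes rp =1 DesC n al.
Proof.
move=> d; apply/wDesP/idP => [[p [q [e1 e2 e3]]]|].
  rewrite /DesC e3; apply/and3P; split; [lia | exact: ltn_ord |].
  apply/negP => hD; move: (bk_consec e1); rewrite hD addn1 => eb.
  have : (bk p < bk q)%N by rewrite eb.
  by move/rp_diff; rewrite ltnNge ltnW.
case/and3P => d0 dn hD.
have pn : (d.-1 < n)%N by lia.
exists (Ordinal pn), (Ordinal dn); split => //=; first by lia.
apply: rp_same => /=; last by lia.
have e : (Ordinal dn : nat) = (Ordinal pn).+1 by rewrite /=; lia.
by rewrite (bk_consec e) /= (negbTE hD) addn0.
Qed.

Lemma chain (f : 'I_n -> nat) :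
  (forall p q : 'I_n, (q : nat) = p.+1 -> bk p = bk q -> (f p < f q)%N) ->
  forall x y : 'I_n, bk x = bk y -> (x < y)%N -> (f x < f y)%N.
Proof.
move=> H x y; have [m] := ubnP (nat_of_ord y); elim: m y => // m IH y ym e xy.
have zn : (y.-1 < n)%N by apply: leq_ltn_trans (leq_pred _) (ltn_ord y).
set z := Ordinal zn.
have ezy : nat_of_ord y = z.+1 by rewrite /=; lia.
have bz : bk z = bk y.
  apply/eqP; rewrite eqn_leq bk_mono /=; last by lia.
  by rewrite -e bk_mono //= -ltnS -ezy.
case: (eqVneq (nat_of_ord x) z) => hx.
  have -> : x = z by apply: val_inj.
  by apply: H.
have xz : (x < z)%N by rewrite /=; lia.
apply: ltn_trans (IH z _ _ xz) (H _ _ ezy bz); first by rewrite /=; lia.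
by rewrite bz.
Qed.

Definition Wset := [set pq : 'I_n * 'I_n | (pq.1 < pq.2)%N && (bk pq.1 == bk pq.2)].

Lemma Inv_rp : Inv rp = Wset.
Proof.
apply/setP => -[x y]; rewrite !inE /=.
case xy: (x < y)%N => //=.
case: (eqVneq (bk x) (bk y)) => e.
  by rewrite rp_same.
by rewrite ltnNge ltnW // rp_diff // bk_lt.
Qed.

Lemma w0c_rp (v : 'S_n) : is_w0c al v -> v = rp.
Proof.
case=> hv hmin.
have dec : forall x y : 'I_n, bk x = bk y -> (x < y)%N -> (v y < v x)%N.
  move=> x y e xy.
  suff: (n - v x < n - v y)%N by have := ltn_ord (v x); have := ltn_ord (v y); lia.
  apply: (@chain (fun z => n - v z)) e xy => p q e1 e2.
  have : wDes v q.
    rewrite hv /DesC e1 ltn0Sn -e1 ltn_ord /=.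
    by move: (bk_consec e1); rewrite -e2; case: (val q \in Des al) => //; rewrite addn1 => /n_Sn.
  case/wDesP => p' [q' [f1 f2 f3]].
  have eq' : q' = q by apply: val_inj.
  have ep : p' = p by apply: val_inj; move: f1; rewrite eq' e1 => -[].
  move: f2; rewrite eq' ep.
  by have := ltn_ord (v p); have := ltn_ord (v q); lia.
apply: inv_det; rewrite Inv_rp; apply/eqP; rewrite eq_sym eqEcard.
apply/andP; split.
  by apply/subsetP => -[x y]; rewrite !inE /= => /andP[xy /eqP e]; rewrite xy dec.
by rewrite -Inv_rp -!lenE; apply: hmin; exact: wDes_rp.
Qed.

End RBlocks.

Section OPs.
Variable n : nat.
Variable al : seq nat.
Hypothesis Hal : is_composition n al.

Local Notation bk := (@bk al).
Local Notation rp := (rp Hal).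

Definition incb (w : 'S_n) := forall x y : 'I_n, bk x = bk y -> (x < y)%N -> (w x < w y)%N.

Lemma nDes_consec (p q : 'I_n) : (q : nat) = p.+1 -> bk p = bk q -> (q : nat) \notin Des al.
Proof.
by move=> e1 e2; move: (bk_consec Hal e1); rewrite -e2; case: (_ \in _) => //; rewrite addn1 => /n_Sn.
Qed.

Lemma isOP_incb w : isOP al w -> incb w.
Proof.
move=> hw; apply: (chain Hal) => p q e1 e2.
have nD := nDes_consec e1 e2.
case: (ltngtP (w p) (w q)) => // h.
  have : wDes w q by apply/wDesP; exists p, q.
  by move: (forallP hw q) => /implyP hi /hi; rewrite (negbTE nD).
have /perm_inj epq : w p = w q by apply: val_inj.
by move: e1; rewrite epq; lia.
Qed.

Lemma incb_isOP w : incb w -> isOP al w.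
Proof.
move=> hw; apply/forallP => d; apply/implyP => /wDesP [p [q [e1 e2 e3]]].
apply/negPn/negP => hD.
have bq : bk q = bk p by rewrite (bk_consec Hal e1) -e3 (negbTE hD) addn0.
have := hw p q (esym bq); rewrite e1 ltnSn => /(_ isT).
by rewrite ltnNge ltnW.
Qed.

Lemma incb_lmul w i : incb w -> validgen i ->
  bk (pos w i) != bk (pos w (nxt i)) -> incb (lmul i w).
Proof.
move=> hw vi hb x y e xy; rewrite !lmulE sgen_lt //; first exact: hw.
  apply/negP => /andP[/eqP h1 /eqP h2]; move: hb.
  by rewrite -h2 -h1 !Kpos e eqxx.
apply/negP => /andP[/eqP h1 /eqP h2].
have := hw x y e xy; rewrite h1 h2 nxtE //; lia.
Qed.

Lemma pos_rp x : pos rp x = rp x.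
Proof. by rewrite /pos -{1}(rpK Hal x) permK. Qed.

Lemma tgt_rp p : validgen p -> bk p = bk (nxt p) -> tgt p rp = rp.
Proof.
move=> vp e; rewrite tgtE // !pos_rp.
have := rp_same Hal e; rewrite nxtE // ltnSn => /(_ isT) h.
by rewrite ltnNge ltnW.
Qed.

Lemma len_rpw w : incb w -> len (rp * w)%g = (len rp + len w)%N.
Proof.
move=> hw.
set D := [set pq : 'I_n * 'I_n | [&& (pq.1 < pq.2)%N, bk pq.1 != bk pq.2 &
          (w (rp pq.2) < w (rp pq.1))%N]].
have eI : Inv (rp * w)%g = Wset n al :|: D.
  apply/setP => -[x y]; rewrite !inE /= !permM.
  case xy: (x < y)%N => //=.
  case: (eqVneq (bk x) (bk y)) => e //=.
  apply: hw; first by rewrite !(rp_bk Hal).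
  by apply: (rp_same Hal).
have dj : Wset n al :&: D = set0.
  apply/setP => -[x y]; rewrite !inE /=.
  by case: (bk x == bk y); rewrite ?andbF.
set g := fun pq : 'I_n * 'I_n => (rp pq.1, rp pq.2).
have gK : involutive g by move=> -[x y]; rewrite /g /= !(rpK Hal).
have eD : D = g @^-1: Inv w.
  apply/setP => -[x y]; rewrite !inE /=.
  apply/idP/idP.
    case/and3P => xy ne h; rewrite h andbT.
    by apply: rp_diff; apply: bk_lt.
  case/andP => h1 h2.
  have ne : bk x != bk y.
    apply/eqP => e.
    have := hw (rp x) (rp y); rewrite !(rp_bk Hal) e => /(_ erefl h1).
    by rewrite ltnNge ltnW.
  rewrite ne h2 andbT /=.
  case: (ltngtP x y) => // yx.
    rewrite eq_sym in ne; move: (bk_lt yx ne) => /(rp_diff Hal).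
    by rewrite ltnNge ltnW.
  have exy : x = y by apply: val_inj; exact: yx.
  by move: ne; rewrite exy eqxx.
rewrite !lenE eI cardsU dj cards0 subn0 eD card_preimset; last exact: can_inj gK.
by rewrite (Inv_rp Hal).
Qed.

End OPs.

Local Open Scope ring_scope.

Section Hecke.
Variable n : nat.
Variable F : fieldType.
Implicit Types (i j : 'I_n) (w u : 'S_n) (ws a : seq 'I_n) (h : Hn n F).

Lemma sum_comp (f g : 'S_n -> 'S_n) (H : 'S_n -> F) u :
  \sum_(w' | f w' == u) \sum_(w | g w == w') H w = \sum_(w | f (g w) == u) H w.
Proof.
rewrite [RHS](partition_big g (fun w' => f w' == u)) //=.
apply: eq_bigr => w' /eqP fw; apply: eq_bigl => w.
by apply/idP/andP => [/eqP gw|[_ ->//]]; rewrite gw fw eqxx.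
Qed.

Lemma hpiE i h u : hpi i h u = \sum_(w | tgt i w == u) h w.
Proof. by rewrite ffunE. Qed.

Lemma hpi2E i j h u : hpi i (hpi j h) u = \sum_(w | tgt i (tgt j w) == u) h w.
Proof.
rewrite hpiE -(sum_comp (tgt i) (tgt j)); apply: eq_bigr => w' _; exact: hpiE.
Qed.

Lemma hpi3E i j k h u :
  hpi i (hpi j (hpi k h)) u = \sum_(w | tgt i (tgt j (tgt k w)) == u) h w.
Proof.
rewrite hpi2E -(sum_comp (fun w => tgt i (tgt j w)) (tgt k)).
apply: eq_bigr => w' _; exact: hpiE.
Qed.

Lemma hpiB i (x y : Hn n F) : hpi i (x - y) = hpi i x - hpi i y.
Proof.
apply/ffunP => u; rewrite !ffunE -sumrB; apply: eq_bigr => w _; by rewrite !ffunE.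
Qed.

Lemma hpi0 i : hpi i (0 : Hn n F) = 0.
Proof. apply/ffunP => u; rewrite !ffunE big1 // => w _; by rewrite ffunE. Qed.

Lemma hpi_idem i h : validgen i -> hpi i (hpi i h) = hpi i h.
Proof.
move=> v; apply/ffunP => u; rewrite hpi2E hpiE.
by apply: eq_bigl => w; rewrite tgt_idem.
Qed.

Lemma hpi_far i j h : validgen i -> validgen j -> (i.+1 < j)%N ->
  hpi i (hpi j h) = hpi j (hpi i h).
Proof.
move=> vi vj ij; apply/ffunP => u; rewrite !hpi2E.
by apply: eq_bigl => w; rewrite tgt_far.
Qed.

Lemma hpi_braid i j h : validgen i -> validgen j -> val j = i.+1 ->
  hpi i (hpi j (hpi i h)) = hpi j (hpi i (hpi j h)).
Proof.
move=> vi vj ij; apply/ffunP => u; rewrite !hpi3E.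
by apply: eq_bigl => w; rewrite tgt_braid.
Qed.

Lemma hpibar_far i j h : validgen i -> validgen j -> (i.+1 < j)%N ->
  hpibar i (hpibar j h) = hpibar j (hpibar i h).
Proof.
move=> vi vj ij; rewrite /hpibar !hpiB hpi_far //.
move: (hpi j (hpi i h)) (hpi i h) (hpi j h) => X A B.
apply/ffunP => u; rewrite !ffunE; ring.
Qed.

Lemma hpibar_braid i j h : validgen i -> validgen j -> val j = i.+1 ->
  hpibar i (hpibar j (hpibar i h)) = hpibar j (hpibar i (hpibar j h)).
Proof.
move=> vi vj ij; rewrite /hpibar !hpiB !hpi_idem // hpi_braid //.
move: (hpi j (hpi i (hpi j h))) (hpi i (hpi j h)) (hpi j (hpi i h)) (hpi i h) (hpi j h).
move=> X A B C D; apply/ffunP => u; rewrite !ffunE; ring.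
Qed.

Lemma hpibar_word0 ws : hpibar_word ws (0 : Hn n F) = 0.
Proof. elim: ws => //= i ws ->; by rewrite /hpibar hpi0 subr0. Qed.

Lemma eHE w u : (eH F w : Hn n F) u = (u == w)%:R.
Proof. by rewrite ffunE. Qed.

Lemma hpi_eH i y : hpi i (eH F y) = eH F (tgt i y).
Proof.
apply/ffunP => u; rewrite hpiE eHE.
rewrite (eq_bigr (fun w => (w == y)%:R)); last by move=> w _; rewrite eHE.
rewrite big_mkcond (bigD1 y) //= eqxx big1 ?addr0; last first.
  by move=> w /negbTE ->; case: ifP.
by rewrite eq_sym; case: eqP.
Qed.


Lemma hpiD i (x y : Hn n F) : hpi i (x + y) = hpi i x + hpi i y.
Proof.
apply/ffunP => u; rewrite !ffunE -big_split; apply: eq_bigr => w _; by rewrite !ffunE.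
Qed.

Lemma lead_term (v : 'S_n) (P : 'S_n -> Prop)
  (Hadd : forall w, P w -> len (v * w)%g = (len v + len w)%N)
  (HP : forall w i, P w -> validgen i -> (pos w (nxt i) < pos w i)%N -> P (lmul i w)) :
  forall ws w, reduced_word ws w -> P w ->
  exists g : Hn n F, hpibar_word ws (eH F v) = eH F (v * w)%g + g /\
    forall x, (len (v * w)%g <= len x)%N -> g x = 0.
Proof.
elim=> [|i a IH] w.
  case/and3P => _ /eqP <- _ _; exists 0; rewrite /wordperm /= mulg1 addr0.
  by split => // x _; rewrite ffunE.
move=> ra Pw; case: (red_cons ra) => vi ra' di.
have Pw' := HP _ _ Pw vi di.
have [g' [e' hg']] := IH _ ra' Pw'.
set w' := lmul i w in e' hg' Pw'.
have lw : len w = (len w').+1 := len_lmul_down vi di.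
have lvw : len (v * w)%g = (len (v * w')%g).+1 by rewrite !Hadd // lw addnS.
have e : lmul i (v * w')%g = (v * w)%g.
  by rewrite /lmul -mulgA -/(lmul i w') /w' lmulK.
have ht : tgt i (v * w')%g = (v * w)%g by rewrite /tgt e lvw ltnSn.
exists (hpi i g' - eH F (v * w')%g - g'); split.
  rewrite /= e' /hpibar hpiD hpi_eH ht.
  move: (eH F (v * w)%g) (eH F (v * w')%g) (hpi i g') => X Y Z.
  apply/ffunP => u; rewrite !ffunE; ring.
move=> x hx; rewrite !ffunE big1 ?hg'; last first.
  move=> y /eqP ty; apply: hg'.
  have := len_tgt y vi; rewrite ty; lia.
  lia.
have -> : (x == (v * w')%g) = false.
  by apply/negbTE/eqP => ex; move: hx; rewrite ex lvw ltnn.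
by rewrite subrr sub0r oppr0.
Qed.

End Hecke.

Local Open Scope ring_scope.

Lemma sum_delta (F : fieldType) (T : finType) (t0 : T) (f : T -> F) :
  \sum_(t : T) (t == t0)%:R * f t = f t0.
Proof.
rewrite (bigD1 t0) //= eqxx mul1r big1 ?addr0 // => t /negbTE ->.
by rewrite mul0r.
Qed.

Section Span.
Variables (n : nat) (F : fieldType) (A : finType).
Variable op : 'I_n -> {ffun A -> F} -> {ffun A -> F}.
Hypothesis op_lin : forall i (m : nat) (c : 'I_m -> F) (y : 'I_m -> {ffun A -> F}),
  op i [ffun t => \sum_(k < m) c k * y k t] = [ffun t => \sum_(k < m) c k * op i (y k) t].
Variable x0 : {ffun A -> F}.

Definition spanP (x : {ffun A -> F}) := exists m (c : 'I_m -> F) (ws : 'I_m -> seq 'I_n),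
  (forall k, validword (ws k)) /\ x = [ffun t => \sum_(k < m) c k * foldr op x0 (ws k) t].

Lemma span_x0 : spanP x0.
Proof.
exists 1%N, (fun _ => 1), (fun _ => [::]); split => //.
by apply/ffunP => t; rewrite ffunE big_ord1 mul1r.
Qed.

Lemma span0 : spanP 0.
Proof.
exists 0%N, (fun _ => 1), (fun _ => [::]); split => //.
by apply/ffunP => t; rewrite !ffunE big_ord0.
Qed.

Lemma span_add x y : spanP x -> spanP y -> spanP (x + y).
Proof.
move=> [m1 [c1 [ws1 [v1 ->]]]] [m2 [c2 [ws2 [v2 ->]]]].
exists (m1 + m2)%N, (fun k => match split k with inl a => c1 a | inr b => c2 b end),
  (fun k => match split k with inl a => ws1 a | inr b => ws2 b end); split.
  by move=> k; case: (split k).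
apply/ffunP => t; rewrite !ffunE big_split_ord /=.
by congr (_ + _); apply: eq_bigr => k _;
  rewrite (unsplitK (inl _ : 'I_m1 + 'I_m2)) || rewrite (unsplitK (inr _ : 'I_m1 + 'I_m2)).
Qed.

Lemma span_scale a x : spanP x -> spanP [ffun t => a * x t].
Proof.
move=> [m [c [ws [v ->]]]]; exists m, (fun k => a * c k), ws; split => //.
apply/ffunP => t; rewrite !ffunE mulr_sumr; apply: eq_bigr => k _; by rewrite mulrA.
Qed.

Lemma span_op i x : validgen i -> spanP x -> spanP (op i x).
Proof.
move=> vi [m [c [ws [v ->]]]]; exists m, c, (fun k => i :: ws k); split.
  by move=> k; rewrite /validword /= vi; exact: v.
by rewrite op_lin.
Qed.

Lemma span_sum (I : finType) (f : I -> F) (y : I -> {ffun A -> F}) :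
  (forall j, spanP (y j)) -> spanP [ffun t => \sum_j f j * y j t].
Proof.
move=> hy.
have -> : [ffun t => \sum_j f j * y j t] = \sum_j [ffun t => f j * y j t].
  by apply/ffunP => t; rewrite ffunE sum_ffunE; apply: eq_bigr => j _; rewrite ffunE.
apply: (big_ind spanP span0 span_add) => j _; exact: span_scale.
Qed.

Lemma span_ind (P : {ffun A -> F} -> Prop) :
  P x0 -> P 0 -> (forall x y, P x -> P y -> P (x + y)) ->
  (forall a x, P x -> P [ffun t => a * x t]) ->
  (forall i x, validgen i -> P x -> P (op i x)) ->
  forall x, spanP x -> P x.
Proof.
move=> h0 h00 hadd hsc hop x [m [c [ws [v ->]]]].
have -> : [ffun t => \sum_(k < m) c k * foldr op x0 (ws k) t] =
    \sum_(k < m) [ffun t => c k * foldr op x0 (ws k) t].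
  by apply/ffunP => t; rewrite ffunE sum_ffunE; apply: eq_bigr => j _; rewrite ffunE.
apply: (big_ind P h00 hadd) => k _; apply: hsc.
have := v k; elim: (ws k) => //= i w IH /andP[vi vw].
by apply: hop => //; apply: IH.
Qed.

End Span.

Local Open Scope ring_scope.

Section Main.
Variables (n : nat) (F : fieldType) (al : seq nat).
Hypothesis Hal : is_composition n al.
Variable rw : 'S_n -> seq 'I_n.
Hypothesis Hrw : forall w, reduced_word (rw w) w.
Local Notation rp := (rp Hal).
Local Notation bk := (bk al).

Lemma hpi_lin i (m : nat) (c : 'I_m -> F) (y : 'I_m -> Hn n F) :
  hpi i [ffun t => \sum_(k < m) c k * y k t] = [ffun t => \sum_(k < m) c k * hpi i (y k) t].
Proof.
apply/ffunP => u; rewrite !ffunE; under eq_bigr do rewrite ffunE.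
rewrite exchange_big /=; apply: eq_bigr => k _; by rewrite hpiE mulr_sumr.
Qed.

Lemma opi_lin i (m : nat) (c : 'I_m -> F) (y : 'I_m -> @Mod n F al) :
  opi i [ffun t => \sum_(k < m) c k * y k t] = [ffun t => \sum_(k < m) c k * opi i (y k) t].
Proof.
apply/ffunP => u; rewrite !ffunE; under eq_bigr do rewrite ffunE mulr_suml.
rewrite exchange_big /=; apply: eq_bigr => k _; rewrite ffunE mulr_sumr.
by apply: eq_bigr => s _; rewrite mulrA.
Qed.

Definition bb (s : OP n al) : Hn n F := hpibar_word (rw (val s)) (eH F rp).

Lemma MAT w a : reduced_word a w ->
  hpibar_word a (eH F rp) = hpibar_word (rw w) (eH F rp).
Proof.
move=> ra; apply: (matsumoto (T := @hpibar n F)) ra (Hrw w).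
- by move=> i j x vi vj ij; apply: hpibar_far.
- by move=> i j x vi vj ij; apply: hpibar_braid.
- exact: Hrw.
Qed.

Lemma opi_eM i (s : OP n al) : opi i (eM F s) = [ffun t => opcoef F i s t].
Proof.
apply/ffunP => t; rewrite !ffunE.
by under eq_bigr do rewrite ffunE; rewrite sum_delta.
Qed.

Lemma incbS (s : OP n al) : incb al (val s).
Proof. exact: (isOP_incb Hal (valP s)). Qed.

Lemma red_up w i : validgen i -> (pos w i < pos w (nxt i))%N ->
  reduced_word (i :: rw w) (lmul i w).
Proof.
move=> vi h; apply: red_consI => //; last by rewrite lmulK; exact: Hrw.
by rewrite !posM sgenL sgenR.
Qed.

Lemma bk_lt_pos (x y : 'I_n) : (bk x < bk y)%N -> (x < y)%N.
Proof.
move=> h; rewrite ltnNge; apply/negP => yx; move: (bk_mono al yx); lia.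
Qed.

Lemma HL i s u : validgen i ->
  \sum_(t : OP n al) opcoef F i s t * bb t u = hpi i (bb s) u.
Proof.
move=> vi; have hw := incbS s; set w := val s in hw *.
have ea : blk al ((w^-1)%g i) = bk (pos w i) := erefl.
have eb : blk al ((w^-1)%g (nxt i)) = bk (pos w (nxt i)) := erefl.
rewrite /opcoef /= -/w ea eb.
case: (ltngtP (bk (pos w (nxt i))) (bk (pos w i))) => hb.
- rewrite big1; last by move=> t _; rewrite mul0r.
  have dab := bk_lt_pos hb.
  have r1 : reduced_word (i :: rw (lmul i w)) w := red_consI vi dab (Hrw _).
  rewrite /bb -/w -(MAT r1) /= /hpibar hpiB hpi_idem // subrr ffunE //.
- have dab := bk_lt_pos hb.
  have ne : bk (pos w i) != bk (pos w (nxt i)) by rewrite neq_ltn hb.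
  have incb2 := incb_lmul Hal hw vi ne.
  set t2 : OP n al := exist _ (lmul i w) (incb_isOP Hal incb2).
  rewrite (eq_bigr (fun t => (t == s)%:R * bb t u + (t == t2)%:R * bb t u)); last first.
    by move=> t _; rewrite mulrDl -val_eqE.
  rewrite big_split /= !sum_delta.
  have e2 : bb t2 = hpi i (bb s) - bb s by rewrite /bb /= -(MAT (red_up vi dab)).
  by rewrite e2 !ffunE; ring.
rewrite sum_delta.
set a := pos w i; set b := pos w (nxt i).
have wa : w a = i by rewrite /a posK.
have wb : w b = nxt i by rewrite /b posK.
have hn := nxtE vi.
have ab : (a < b)%N.
  case: (ltngtP a b) => // h.
    by have := hw b a hb h; rewrite wa wb hn; lia.
  by move: (pos_neq w vi); rewrite -/a -/b -(inj_eq val_inj) /= h eqxx.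
have bab : (b : nat) = a.+1.
  apply/eqP; rewrite eqn_leq ab andbT leqNgt; apply/negP => h.
  have cn : (a.+1 < n)%N by apply: ltn_trans h (ltn_ord b).
  set c := Ordinal cn.
  have b1 : bk a = bk c.
    apply/eqP; rewrite eqn_leq bk_mono //= ?leqnSn //.
    by rewrite -hb bk_mono // ltnW.
  have b2 : bk c = bk b by rewrite -b1 hb.
  have h1 := hw a c b1 (ltnSn _); have h2 := hw c b b2 h.
  by move: h1 h2; rewrite wa wb hn; lia.
have va : validgen a by rewrite /validgen -bab.
have nab : nxt a = b by apply: val_inj; rewrite nxtE.
have dab : (pos w i < pos w (nxt i))%N by [].
have pe : lmul i w = (sgen a * w)%g.
  apply/permP => x; rewrite lmulE permM.
  case: (eqVneq x a) => [->|xa]; first by rewrite wa !sgenL nab wb.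
  case: (eqVneq x b) => [->|xb]; first by rewrite wb sgenR -nab sgenR -/a wa.
  rewrite /sgen tpermD; last 2 first.
  - by rewrite -wa (inj_eq perm_inj) eq_sym.
  - by rewrite -wb (inj_eq perm_inj) eq_sym.
  rewrite tpermD //; first by rewrite eq_sym.
  by rewrite nab eq_sym.
have r3 : reduced_word (rw w ++ [:: a]) (lmul i w).
  case/and3P: (Hrw w) => v1 /eqP v2 /eqP v3.
  apply/and3P; split.
  - by move: v1; rewrite /validword all_cat => ->; rewrite /= va.
  - by rewrite pe /wordperm foldr_cat /= foldr_lmul /lmul mul1g -/(wordperm _) v2.
  - by rewrite size_cat v3 (len_lmul_up vi dab) addn1.
have z : hpibar i (bb s) = 0.
  rewrite /bb -/w; change (hpibar_word (i :: rw w) (eH F rp) = 0).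
  rewrite (MAT (red_up vi dab)) -(MAT r3) /hpibar_word foldr_cat /=.
  rewrite {2}/hpibar hpi_eH tgt_rp ?subrr; first exact: hpibar_word0.
    exact: va.
  by rewrite nab.
by move: z; rewrite /hpibar => /subr0_eq ->.
Qed.


Definition phi (x : @Mod n F al) : Hn n F := [ffun u => \sum_(s : OP n al) x s * bb s u].

Lemma phi_hlin i x : validgen i -> phi (opi i x) = hpi i (phi x).
Proof.
move=> vi; apply/ffunP => u; rewrite !ffunE.
under eq_bigr do rewrite ffunE mulr_suml.
under [RHS]eq_bigr do rewrite ffunE.
rewrite exchange_big [RHS]exchange_big /=; apply: eq_bigr => t _.
rewrite (eq_bigr (fun s => x t * (opcoef F i t s * bb s u))); last by move=> s _; rewrite mulrA.
by rewrite -mulr_sumr HL // hpiE mulr_sumr.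
Qed.

Lemma LT (t : OP n al) : exists g : Hn n F, bb t = eH F (rp * val t)%g + g /\
  forall x, (len (rp * val t)%g <= len x)%N -> g x = 0.
Proof.
apply: (lead_term F (P := incb al)) (Hrw _) (incbS t).
  by move=> w hw; apply: len_rpw.
move=> w i hw vi h; apply: (incb_lmul Hal hw vi); apply/eqP => e.
have := hw _ _ (esym e) h; rewrite !posK nxtE //; lia.
Qed.

Lemma phi_inj : injective phi.
Proof.
move=> x y exy.
have hz u : \sum_(s : OP n al) (x s - y s) * bb s u = 0.
  have := congr1 (fun f : Hn n F => f u) exy; rewrite !ffunE => e.
  rewrite (eq_bigr (fun s => x s * bb s u - y s * bb s u)); last by move=> s _; rewrite mulrBl.
  by rewrite sumrB e subrr.
apply/ffunP => s0; apply/eqP; rewrite -subr_eq0; apply/negPn/negP => hs.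
case: (@arg_maxnP _ s0 [pred s | x s - y s != 0] (fun s => len (rp * val s)%g) hs).
move=> s /= hs1 hmax.
have := hz (rp * val s)%g; rewrite (bigD1 s) //= big1 ?addr0.
  have [g [eg hg]] := LT s.
  by rewrite eg !ffunE eqxx hg // addr0 mulr1 => /eqP; rewrite (negbTE hs1).
move=> t ts.
case: (eqVneq (x t - y t) 0) => [->|ht]; first by rewrite mul0r.
have [g [eg hg]] := LT t.
have le := hmax t ht.
rewrite eg !ffunE hg // addr0.
have -> : ((rp * val s)%g == (rp * val t)%g) = false.
  apply/negbTE; apply: contra ts => /eqP /mulgI /val_inj ->; by [].
by rewrite mulr0.
Qed.


Lemma bb_span_word ws : validword ws ->
  spanP (@hpi n F) (eH F rp) (hpibar_word ws (eH F rp)).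
Proof.
elim: ws => [|i ws IH] /=; first by move=> _; apply: span_x0.
case/andP => vi vw.
have -> : hpibar i (hpibar_word ws (eH F rp)) =
   hpi i (hpibar_word ws (eH F rp)) + [ffun t => -1 * hpibar_word ws (eH F rp) t].
  apply/ffunP => t; rewrite /hpibar !ffunE; ring.
apply: span_add; first by apply: (span_op hpi_lin) => //; apply: IH.
by apply: span_scale; apply: IH.
Qed.

Lemma bb_span s : spanP (@hpi n F) (eH F rp) (bb s).
Proof. by apply: bb_span_word; case/and3P: (Hrw (val s)). Qed.

Variable s0 : OP n al.
Hypothesis Hs0 : val s0 = 1%g.

Lemma rw1 : rw 1%g = [::].
Proof.
case/and3P: (Hrw 1%g) => _ _ /eqP.
have h0 : (len (1%g : 'S_n) <= 0)%N := @len_wordperm n [::] isT.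
move: h0; rewrite leqn0 => /eqP ->; by case: (rw 1%g).
Qed.

Lemma phi_eM0 : phi (eM F s0) = eH F rp.
Proof.
apply/ffunP => u; rewrite ffunE; under eq_bigr do rewrite ffunE.
by rewrite sum_delta /bb Hs0 rw1.
Qed.

Lemma image_iff h : in_left_ideal (eH F rp) h <-> exists x, phi x = h.
Proof.
split.
  move=> hh; have hs : spanP (@hpi n F) (eH F rp) h := hh.
  apply: (span_ind (P := fun h => exists x, phi x = h)) hs.
  - by exists (eM F s0); exact: phi_eM0.
  - exists 0; apply/ffunP => u; rewrite !ffunE big1 // => s _; by rewrite ffunE mul0r.
  - move=> _ _ [x1 <-] [x2 <-]; exists (x1 + x2); apply/ffunP => u; rewrite !ffunE -big_split.
    by apply: eq_bigr => s _; rewrite ffunE mulrDl.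
  - move=> a _ [x <-]; exists [ffun s => a * x s]; apply/ffunP => u; rewrite !ffunE mulr_sumr.
    by apply: eq_bigr => s _; rewrite ffunE mulrA.
  - by move=> i _ vi [x <-]; exists (opi i x); apply: phi_hlin.
case=> x <-; exact: span_sum (fun s => bb_span s).
Qed.

Lemma eM_span s : spanP (@opi n F al) (eM F s0) (eM F s).
Proof.
have [k] := ubnP (len (val s)); elim: k s => // k IH s hk.
case e: (rw (val s)) => [|i a].
  have := Hrw (val s); rewrite e => /and3P[_ /eqP w1 _].
  have -> : s = s0 by apply: val_inj; rewrite Hs0 -w1.
  exact: span_x0.
have := Hrw (val s); rewrite e => ra; case: (red_cons ra) => vi ra' di.
have hw := incbS s; set w := val s in hw hk di *.
have ne : bk (pos w i) != bk (pos w (nxt i)).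
  apply/eqP => eb; have := hw _ _ (esym eb) di; rewrite !posK nxtE //; lia.
have hw' := incb_lmul Hal hw vi ne.
set s' : OP n al := exist _ (lmul i w) (incb_isOP Hal hw').
have hl : (len (val s') < k)%N.
  by move: hk; rewrite (len_lmul_down vi di) ltnS.
have IHs := IH s' hl.
have eo : opi i (eM F s') = eM F s' + eM F s.
  apply/ffunP => t; rewrite opi_eM !ffunE /opcoef /=.
  have b1 : blk al (((lmul i w)^-1)%g i) = bk (pos w (nxt i)).
    by rewrite -[((lmul i w)^-1)%g i]/(pos (lmul i w) i) posM sgenL.
  have b2 : blk al (((lmul i w)^-1)%g (nxt i)) = bk (pos w i).
    by rewrite -[((lmul i w)^-1)%g (nxt i)]/(pos (lmul i w) (nxt i)) posM sgenR.
  have lt : (bk (pos w (nxt i)) < bk (pos w i))%N by apply: bk_lt => //; rewrite eq_sym.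
  rewrite b1 b2 lt ltnNge (ltnW lt) /= lmulK.
  by rewrite -!val_eqE.
have -> : eM F s = opi i (eM F s') + [ffun t => -1 * eM F s' t].
  by apply/ffunP => t; rewrite eo !ffunE; ring.
apply: span_add; first by apply: (span_op opi_lin).
exact: span_scale.
Qed.

Lemma cyclic x : spanP (@opi n F al) (eM F s0) x.
Proof.
have -> : x = [ffun t => \sum_s x s * eM F s t].
  apply/ffunP => t; rewrite ffunE; under eq_bigr do rewrite ffunE mulrC eq_sym.
  by rewrite sum_delta.
exact: span_sum eM_span.
Qed.

End Main.


Unset Implicit Arguments. Set Strict Implicit.
Local Open Scope ring_scope.

Theorem mainTheorem10 (F : fieldType) (n : nat) (al : seq nat)
  (Hal : is_composition n al)
  (v : 'S_n) (Hv : is_w0c al v)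
  (rw : 'S_n -> seq 'I_n) (Hrw : forall w : 'S_n, reduced_word (rw w) w)
  (s0 : OP n al) (Hs0 : val s0 = 1%g) :
  (forall x : @Mod n F al,
     exists (m : nat) (c : 'I_m -> F) (ws : 'I_m -> seq 'I_n),
       (forall k, validword (ws k)) /\
       x = [ffun t => \sum_(k < m) c k * opi_word (ws k) (@eM n F al s0) t]) /\
  (let phi := fun x : @Mod n F al =>
      [ffun u => \sum_(s : OP n al) x s * hpibar_word (rw (val s)) (@eH n F v) u] in
   (forall i x, validgen i -> phi (opi i x) = hpi i (phi x)) /\
   injective phi /\
   (forall h : Hn n F, in_left_ideal (@eH n F v) h <-> exists x, phi x = h)).
Proof.
have ev := w0c_rp Hal Hv; subst v.
split; first exact: (cyclic Hal Hrw Hs0).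
move=> phi; split; first by move=> i x vi; exact: (phi_hlin Hal Hrw x vi).
split; first exact (@phi_inj n F al Hal rw Hrw).
move=> h; exact (image_iff Hal Hrw Hs0 h).
Qed.
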